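(* Let $\Gamma \leq F_d$ be a finitely generated subgroup. Let $g \in F_d$ be an admissible connector for $\mathrm{C}(\Gamma)$ with itself, and let $J$ be the length of the join segment of $g$. Let $\Gamma' := \langle \Gamma, g\Gamma g^{-1}\rangle$. Then for every $R \in \mathbb N$, \[ c_{\Gamma'}(R) \leq \sum_{i=0}^{\lfloor R/(2J) \rfloor} \ \sum_{\substack{\alpha=(\alpha_0,\dots,\alpha_{2i}) \in \mathbb N^{2i+1} \\ \sum_j \alpha_j = R + 2i(|g| - 2J)}} \ \prod_{j=0}^{2i} c_\Gamma(\alpha_j). \]
   Context: $F_d$ is free on $a_1,\dots,a_d$; $|g|$ is the reduced word length, and for $H\le F_d$, $c_H(R) = |\{h\in H \mid |h|\le R\}|$. The Schreier graph $\mathrm{Sch}(H) = H\backslash\mathcal T$ of $H\le F_d$ is the quotient of the directed, $\{a_1,\dots,a_d\}$-labeled Cayley tree $\mathcal T$ of $F_d$, rooted at the image $v_1$ of $1$; a reduced word $b_1\cdots b_k$ (with $b_j\in\{a_i^{\pm1}\}$) defines the path from the root following edges with these labels (traversing an $a_i$-edge backwards for $a_i^{-1}$). The core graph $\mathrm{C}(H)$ is the minimal connected subgraph of $\mathrm{Sch}(H)$ containing the root and all cycles (without backtracking) based at the root. For $g=b_1\cdots b_k$ reduced and finite core graphs $\mathfrak g_1=\mathfrak g_2=\mathrm{C}(\Gamma)$: let $k_1$ be the largest $i\in\{0,\dots,k\}$ such that the path from the root of $\mathfrak g_1$ reading $b_1\cdots b_i$ exists inside $\mathfrak g_1$, and $k_2$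 the largest $i$ such that the path from the root of $\mathfrak g_2$ reading $b_k^{-1}b_{k-1}^{-1}\cdots b_{k-i+1}^{-1}$ exists inside $\mathfrak g_2$. The element $g$ is an admissible connector for $\mathfrak g_1$ with $\mathfrak g_2$ if $k_1+k_2<k$; then the initial segment is $b_1\cdots b_{k_1}$, the terminal segment is (the inverse of) $b_{k-k_2+1}\cdots b_k$, and the join segment is the remaining middle subword $b_{k_1+1}\cdots b_{k-k_2}$, of length $J = k-k_1-k_2$. *)

(* Defs.v *)
From mathcomp Require Import all_boot.
From mathcomp Require Import boolp.
Set Implicit Arguments. Unset Strict Implicit. Unset Printing Implicit Defensive.

(* a letter (i, b): b = false is a_(i+1), b = true is a_(i+1)^{-1} *)
Definition letter (d : nat) := ('I_d * bool)%type.
Definition word (d : nat) := seq (letter d).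

Definition linv d (x : letter d) : letter d := (x.1, ~~ x.2).

Fixpoint reduced d (w : word d) : bool :=
  match w with
  | x :: ((y :: _) as w') => (y != linv x) && reduced w'
  | _ => true
  end.

Definition push d (x : letter d) (w : word d) : word d :=
  match w with
  | y :: w' => if y == linv x then w' else x :: w
  | [::] => [:: x]
  end.
Definition red d (w : word d) : word d := foldr (@push d) [::] w.

Definition wmul d (u v : word d) : word d := red (u ++ v).
Definition winv d (w : word d) : word d := rev (map (@linv d) w).

Definition wset d := word d -> Prop.

Definition gen d (P : wset d) : wset d :=
  fun w => exists l : seq (word d),
      (forall s, s \in l -> P s \/ P (winv s)) /\ w = red (flatten l).

Definition gen_list d (S : seq (word d)) : wset d := gen (fun w => w \in S).

Definition conjset d (g : word d) (H : wset d) : wset d :=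
  fun w => exists h, H h /\ w = wmul (wmul g h) (winv g).

Definition join2 d (H K : wset d) : wset d := gen (fun w => H w \/ K w).

(** c_H(R) = #{h in H | |h| <= R}; elements of H are reduced words, so |h| = size h *)
Definition cnt d (H : wset d) (R : nat) : nat :=
  \sum_(n < R.+1) \sum_(t : n.-tuple (letter d)) (asbool (H (val t)) : nat).

(** * Core graph C(H) (as a subgraph of Sch(H) = H\T)
   Vertices of Sch(H) are right cosets H u; the edge leaving the vertex H u
   with label x (x a letter, traversed backwards if x = a_i^{-1}) is the
   edge of the tree from u to u x, modulo H.  This edge belongs to the core
   graph iff some cycle without backtracking based at the root (i.e. some
   reduced h in H) traverses it, i.e. h = p x q (as words) with H p = H u
   (or h = p x^{-1} q with H p = H u x; this case is the first one applied
   to h^{-1}). *)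
Definition core_edge d (H : wset d) (u : word d) (x : letter d) : Prop :=
  exists h p q, H h /\ h = p ++ x :: q /\ H (wmul p (winv u)).

(* the path from the root reading w exists inside C(H) *)
Definition in_core d (H : wset d) (w : word d) : Prop :=
  forall j, j < size w -> forall x0, core_edge H (take j w) (nth x0 w j).

(* Main.v *)
Require Import Defs.
From mathcomp Require Import all_boot.
From mathcomp Require Import boolp.
From mathcomp Require Import zify.
Set Implicit Arguments. Unset Strict Implicit. Unset Printing Implicit Defensive.

Lemma linvK d : involutive (@linv d).
Proof. by case=> i b; rewrite /linv /= negbK. Qed.

Lemma linv_inj d : injective (@linv d).
Proof. exact: inv_inj (@linvK d). Qed.

Lemma reduced_cons d (x : letter d) w : reduced (x :: w) -> reduced w.
Proof. by case: w => //= y w /andP[]. Qed.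

Lemma push_reduced d (x : letter d) w : reduced w -> reduced (push x w).
Proof.
case: w => [|y w] //=; case: ifP => [_|/negbT H Hr]; first exact: reduced_cons.
by apply/andP; split; [rewrite H | exact: Hr].
Qed.

Lemma reduced_red d (w : word d) : reduced (red w).
Proof. elim: w => //= x w IH; exact: push_reduced. Qed.

Lemma red_reduced d (w : word d) : reduced w -> red w = w.
Proof.
elim: w => //= x w IH Hr; rewrite IH; last exact: reduced_cons Hr.
case: w Hr {IH} => //= y w /andP[H _]; by rewrite (negbTE H).
Qed.

Lemma red_red d (w : word d) : red (red w) = red w.
Proof. exact/red_reduced/reduced_red. Qed.

Lemma push_cancel d (x : letter d) w : reduced w -> push x (push (linv x) w) = w.
Proof.
case: w => [|y w] /=; first by rewrite eqxx.
rewrite linvK; case: ifP => [/eqP-> | Hne] Hr /=.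
- case: w Hr => [|z w] //= /andP[H _]; by rewrite (negbTE H).
- by rewrite eqxx.
Qed.

Lemma foldr_push_reduced d (w u : word d) : reduced w -> reduced (foldr (@push d) w u).
Proof. move=> Hw; elim: u => //= x u IH; exact: push_reduced. Qed.

Lemma red_cat d (u v : word d) : red (u ++ v) = foldr (@push d) (red v) u.
Proof. by rewrite /red foldr_cat. Qed.

Lemma red_catr d (u v : word d) : red (u ++ red v) = red (u ++ v).
Proof. by rewrite !red_cat red_red. Qed.

Lemma foldr_push_red d (w u : word d) : reduced w ->
  foldr (@push d) w (red u) = foldr (@push d) w u.
Proof.
move=> Hw; elim: u => //= x u IH; rewrite -IH.
have Hr := reduced_red u; move: Hr; set r := red u => Hr.
case: r Hr => [|y r] Hr //=.
case: ifP => [/eqP Ey | _] //=.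
rewrite Ey push_cancel //; apply: foldr_push_reduced Hw.
Qed.

Lemma red_catl d (u v : word d) : red (red u ++ v) = red (u ++ v).
Proof. by rewrite !red_cat foldr_push_red // reduced_red. Qed.

Lemma red_cat2 d (u v : word d) : red (red u ++ red v) = red (u ++ v).
Proof. by rewrite red_catl red_catr. Qed.

Lemma red_congr d (u v v' : word d) : red v = red v' -> red (u ++ v) = red (u ++ v').
Proof. by move=> E; rewrite !red_cat E. Qed.

Lemma red_mid d (p y q : word d) : red (p ++ red y ++ q) = red (p ++ y ++ q).
Proof. apply: red_congr; exact: red_catl. Qed.

Lemma red_cancel d (u : word d) x v : red (u ++ x :: linv x :: v) = red (u ++ v).
Proof. by rewrite !red_cat /= push_cancel // reduced_red. Qed.

Lemma winvK d : involutive (@winv d).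
Proof. by move=> w; rewrite /winv map_rev revK (mapK (@linvK d)). Qed.

Lemma winv_cat d (u v : word d) : winv (u ++ v) = winv v ++ winv u.
Proof. by rewrite /winv map_cat rev_cat. Qed.

Lemma winv_cons d (x : letter d) w : winv (x :: w) = winv w ++ [:: linv x].
Proof. by rewrite /winv /= rev_cons cats1. Qed.

Lemma size_winv d (w : word d) : size (winv w) = size w.
Proof. by rewrite /winv size_rev size_map. Qed.

Lemma winv_nil d : winv (@nil (letter d)) = [::].
Proof. by []. Qed.

Lemma red_cancelw d (u w v : word d) : red (u ++ w ++ winv w ++ v) = red (u ++ v).
Proof.
elim: w u v => [|x w IH] u v //=.
rewrite winv_cons -catA /=.
have -> : u ++ x :: w ++ winv w ++ linv x :: v = (u ++ [:: x]) ++ w ++ winv w ++ linv x :: v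
  by rewrite -catA.
by rewrite IH -catA /= red_cancel.
Qed.

Lemma red_cancelw' d (u w v : word d) : red (u ++ winv w ++ w ++ v) = red (u ++ v).
Proof. by rewrite -{2}(winvK w) red_cancelw. Qed.

Lemma red_cancel_pre d (w v : word d) : red (winv w ++ w ++ v) = red v.
Proof. exact: (red_cancelw' [::]). Qed.

Lemma red_cancel_pre' d (w v : word d) : red (w ++ winv w ++ v) = red v.
Proof. exact: (red_cancelw [::]). Qed.

Lemma red_nil d : red (@nil (letter d)) = [::]. Proof. by []. Qed.

Lemma red_inv_r d (w : word d) : red (w ++ winv w) = [::].
Proof. by rewrite -[w ++ winv w]cats0 -catA red_cancel_pre'. Qed.

Definition olast d (w : word d) := ohead (rev w).
Definition jn d (u v : word d) : bool :=
  match olast u, ohead v with Some p, Some q => q != linv p | _, _ => true end.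

Lemma ohead_map d (f : letter d -> letter d) w : ohead (map f w) = omap f (ohead w).
Proof. by case: w. Qed.

Lemma olast_winv d (w : word d) : olast (winv w) = omap (@linv d) (ohead w).
Proof. by rewrite /olast /winv revK ohead_map. Qed.

Lemma ohead_winv d (w : word d) : ohead (winv w) = omap (@linv d) (olast w).
Proof. by rewrite /olast /winv -map_rev ohead_map. Qed.

Lemma olast_cons d (x : letter d) w : olast (x :: w) = if w is [::] then Some x else olast w.
Proof.
case: w => [|y w] //; rewrite /olast rev_cons.
case E: (rev (y :: w)) => [|z t]; first by move/(congr1 size): E; rewrite size_rev.
by rewrite rcons_cons.
Qed.

Lemma olast_cat d (u v : word d) : v <> [::] -> olast (u ++ v) = olast v.
Proof.
move=> H; rewrite /olast rev_cat; case E: (rev v) => [|z t] //.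
by move/(congr1 (@rev _)): E; rewrite revK.
Qed.

Lemma ohead_cat d (u v : word d) : u <> [::] -> ohead (u ++ v) = ohead u.
Proof. by case: u. Qed.

Lemma jn_r d (u v v' : word d) : ohead v = ohead v' -> jn u v = jn u v'.
Proof. by rewrite /jn => ->. Qed.

Lemma jn_l d (u u' v : word d) : olast u = olast u' -> jn u v = jn u' v.
Proof. by rewrite /jn => ->. Qed.

Lemma reduced_cc d (x y : letter d) w : reduced [:: x, y & w] = (y != linv x) && reduced (y :: w).
Proof. by []. Qed.

Lemma reduced_cat d (u v : word d) : reduced (u ++ v) = [&& reduced u, reduced v & jn u v].
Proof.
elim: u => [|x u IH]; first by rewrite /jn /olast /=; case: (reduced v).
case: u IH => [|y u] IH.
- case: v {IH} => [|z v]; first by rewrite /jn /=.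
  rewrite cat1s reduced_cc /jn /olast /=; by rewrite andbC.
- rewrite !cat_cons reduced_cc -cat_cons IH reduced_cc.
  rewrite (@jn_l _ (x :: y :: u) (y :: u)); last by rewrite olast_cons.
  by rewrite !andbA.
Qed.



Lemma reduced_winv d (w : word d) : reduced w -> reduced (winv w).
Proof.
elim: w => // x w IH Hr; rewrite winv_cons reduced_cat IH ?(reduced_cons Hr) //=.
rewrite /jn olast_winv; case: w Hr {IH} => // y w; rewrite reduced_cc => /andP[H _] /=.
by apply: contra H => /eqP H; rewrite H linvK.
Qed.

Lemma red_winv d (w : word d) : red (winv w) = winv (red w).
Proof.
elim: w => //= x w IH; rewrite winv_cons -red_catl IH.
have Hr := reduced_red w; move: Hr; set r := red w => Hr.
case: r Hr => [|y r] Hr /=; first by [].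
case: ifP => [/eqP Ey | Hne].
- rewrite winv_cons -catA /= Ey linvK -[[:: x; linv x]]cats0 red_cancel cats0.
  exact/red_reduced/reduced_winv/(reduced_cons Hr).
- rewrite -winv_cons red_reduced //; apply: reduced_winv.
  by apply/andP; split; [rewrite Hne | exact: Hr].
Qed.

Lemma size_push d (x : letter d) w : size w <= (size (push x w)).+1.
Proof. case: w => [|y w] //=; case: ifP => //= _; lia. Qed.

Lemma size_foldr_push d (u w : word d) : size w <= size (foldr (@push d) w u) + size u.
Proof.
elim: u => [|x u IH] /=; first by rewrite addn0.
have := size_push x (foldr (@push d) w u); lia.
Qed.

Lemma size_red_catl d (u w : word d) : size (red w) <= size (red (u ++ w)) + size u.
Proof. rewrite red_cat; exact: size_foldr_push. Qed.

Lemma size_red_catr d (w u : word d) : size (red w) <= size (red (w ++ u)) + size u.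
Proof.
rewrite -(size_winv (red (w ++ u))) -red_winv winv_cat -(size_winv u).
rewrite -(size_winv (red w)) -red_winv; exact: size_red_catl.
Qed.

Lemma size_red3 d (u v w : word d) : reduced v -> size v <= size (red (u ++ v ++ w)) + size u + size w.
Proof.
move=> Hv; have := size_red_catl u (v ++ w); have := size_red_catr v w.
rewrite red_reduced //; lia.
Qed.

Lemma red_decomp d (A B : word d) : reduced A -> reduced B ->
  exists P s Q, [/\ A = P ++ s, B = winv s ++ Q & red (A ++ B) = P ++ Q].
Proof.
move=> + HB; elim: A => [|a A IH] HA.
  by exists [::], [::], B; split => //=; rewrite red_reduced.
have [P' [s' [Q' [EA EB Er]]]] := IH (reduced_cons HA).
have -> : red ((a :: A) ++ B) = push a (red (A ++ B)) by [].
rewrite Er.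
case: P' EA Er => [|p P''] /= EA Er.
- case: Q' EB Er => [|q Q''] EB Er /=.
  + by exists [:: a], s', [::]; split => //; rewrite EA.
  + case: ifP => [/eqP Eq | Hne].
    * exists [::], (a :: s'), Q''; split => //; first by rewrite EA.
      by rewrite EB winv_cons -catA /= Eq.
    * by exists [:: a], s', (q :: Q''); split => //; rewrite EA.
- move: HA; rewrite EA /= => /andP[Hp _]; rewrite (negbTE Hp).
  by exists [:: a, p & P''], s'; exists Q'; split.
Qed.

Lemma gen_reduced d (P : wset d) w : gen P w -> reduced w.
Proof. by case=> l [_ ->]; exact: reduced_red. Qed.

Lemma gen_nil d (P : wset d) : gen P [::].
Proof. by exists [::]. Qed.

Lemma gen_mul d (P : wset d) u v : gen P u -> gen P v -> gen P (red (u ++ v)).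
Proof.
move=> [l1 [H1 ->]] [l2 [H2 ->]]; exists (l1 ++ l2); split.
  by move=> s; rewrite mem_cat => /orP[/H1|/H2].
by rewrite red_cat2 flatten_cat.
Qed.

Lemma winv_flatten d (l : seq (word d)) : winv (flatten l) = flatten (rev (map (@winv d) l)).
Proof.
elim: l => //= s l IH; rewrite winv_cat IH rev_cons -cats1 flatten_cat /=.
by rewrite cats0.
Qed.

Lemma gen_inv d (P : wset d) u : gen P u -> gen P (winv u).
Proof.
move=> [l [H ->]]; exists (rev (map (@winv d) l)); split.
  move=> s; rewrite mem_rev => /mapP [s0 /H Hs0 ->]; rewrite winvK; tauto.
by rewrite -red_winv winv_flatten.
Qed.

Lemma gen_base d (P : wset d) u : P u -> reduced u -> gen P u.
Proof.
move=> Hu Hr; exists [:: u]; split; first by move=> s; rewrite inE => /eqP ->; left.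
by rewrite /= cats0 red_reduced.
Qed.

Lemma core_transport d (G : wset d) u u' x : (forall a b, G a -> G b -> G (red (a ++ b))) ->
  core_edge G u' x -> G (red (u' ++ winv u)) -> core_edge G u x.
Proof.
move=> Gmul [h [p [q [Hh [Eh Hp]]]]] H; exists h, p, q; split => //; split => //.
have := Gmul _ _ Hp H; rewrite /wmul red_cat2 -catA red_cancelw'; exact.
Qed.

Lemma core_R_step d (S : seq (word d)) u v x :
  let G := gen_list S in
  (forall u', size u' < size u -> reduced (u' ++ v) -> G (red (u' ++ v ++ winv u')) -> core_edge G u' x) ->
  reduced (u ++ v) -> ohead v = Some x -> G (red (u ++ v ++ winv u)) -> core_edge G u x.
Proof.
move=> G IH Hr Hv HG.
case: v Hv Hr HG IH => [|x' v'] // [->] Hr HG IH.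
have Hu : reduced u by move: Hr; rewrite reduced_cat => /andP[].
have [P [s [Q [EA EB Er]]]] := red_decomp Hr (reduced_winv Hu).
have szA := congr1 size EA; rewrite !size_cat in szA.
have szB := congr1 size EB; rewrite !size_cat !size_winv in szB.
case: (ltnP (size s) (size (x :: v'))) => Hs.
- have EP : P = u ++ x :: take (size (x :: v') - size s).-1 v'.
    have := congr1 (take (size P)) EA; rewrite (@take_size_cat _ _ P s) // => <-.
    rewrite take_cat ifN; last by lia.
    have -> : size P - size u = (size (x :: v') - size s).-1.+1 by lia.
    by [].
  exists (P ++ Q), u, (take (size (x :: v') - size s).-1 v' ++ Q); split.
    by rewrite -Er -catA.
  split; first by rewrite EP -catA.
  by rewrite /wmul red_inv_r; exact: gen_nil.
- have Es : s = drop (size P) u ++ x :: v'.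
    have := congr1 (drop (size P)) EA; rewrite (@drop_size_cat _ _ P s) // => <-.
    rewrite drop_cat; case: ifP => H; first by [].
    have -> : size P = size u by lia.
    by rewrite subnn drop0 drop_size.
  set u' := winv Q ++ drop (size P) u.
  have Eu : u = u' ++ x :: v'.
    by rewrite -(winvK u) EB winv_cat winvK Es /u' catA.
  clearbody u'.
  have HG' : G (red (u' ++ (x :: v') ++ winv u')).
    move: HG; rewrite Eu winv_cat -!catA.
    by rewrite (catA u' (x :: v') (_ ++ _)) red_cancelw -catA.
  have Hc : core_edge G u' x.
    apply: IH => //; first by rewrite Eu size_cat /=; lia.
    by rewrite -Eu.
  apply: core_transport Hc _; first by move=> *; apply: gen_mul.
  have := gen_inv HG'; rewrite -red_winv !winv_cat winvK -catA.
  by rewrite Eu winv_cat.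
Qed.

Lemma core_R d (S : seq (word d)) u v x :
  let G := gen_list S in
  reduced (u ++ v) -> ohead v = Some x -> G (red (u ++ v ++ winv u)) -> core_edge G u x.
Proof.
move=> G; move: {2}(size u) (leqnn (size u)) => n; elim: n u => [|n IHn] u Hn Hr Hv HG.
  apply: (core_R_step (S:=S) (u:=u) (v:=v)) Hr Hv HG => u' Hu'; exfalso; lia.
apply: (core_R_step (S:=S) (u:=u) (v:=v)) Hr (Hv) HG => u' Hu' Hr' HG'.
apply: IHn => //; lia.
Qed.

Lemma K1 d (S : seq (word d)) u g x :
  let G := gen_list S in
  G g -> reduced u -> jn u [:: x] -> ohead (red (winv u ++ g ++ u)) = Some x -> core_edge G u x.
Proof.
move=> G Hg Hu Hj Hv; apply: (core_R (v := red (winv u ++ g ++ u))) => //.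
- rewrite reduced_cat Hu reduced_red /=; by rewrite (jn_r u (v' := [:: x])).
- rewrite red_mid -!catA red_cancel_pre'.
  rewrite -(cats0 (winv u)) red_cancelw cats0 red_reduced //; exact: gen_reduced Hg.
Qed.

Lemma K2 d (S : seq (word d)) u g x :
  let G := gen_list S in
  G g -> reduced u -> jn u [:: x] -> ohead (red (winv u ++ g)) = Some x -> core_edge G u x.
Proof.
move=> G Hg Hu Hj; case Ev: (red (winv u ++ g)) => [|x' q] //= [Ex].
subst x'; exists g, u, q; split => //; split; last by rewrite /wmul red_inv_r; exact: gen_nil.
have Hr : reduced (u ++ red (winv u ++ g)).
  rewrite reduced_cat Hu reduced_red /=; by rewrite (jn_r u (v' := [:: x])) ?Ev.
rewrite -Ev -(red_reduced Hr) red_catr red_cancel_pre' red_reduced //; exact: gen_reduced Hg.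
Qed.

Lemma in_core_ext d (G : wset d) (w : word d) i x0 : i < size w -> in_core G (take i w) ->
  core_edge G (take i w) (nth x0 w i) -> in_core G (take i.+1 w).
Proof.
move=> Hi Hc He j; rewrite size_takel // => Hj y0.
rewrite nth_take // take_takel //; last by lia.
case: (ltngtP j i) => [Hlt|Hgt|->].
- have := Hc j _ y0; rewrite size_takel ?(ltnW Hi) // nth_take // take_takel ?(ltnW Hlt) //.
  by apply.
- exfalso; lia.
- by rewrite (set_nth_default x0 y0 Hi).
Qed.

Fixpoint ev d (g : word d) (l : seq (word d)) : word d :=
  match l with
  | [::] => [::]
  | c :: l' => match l' with [::] => c | o :: rest => c ++ g ++ o ++ winv g ++ ev g rest end
  end.

Inductive NF d (G : wset d) : seq (word d) -> Prop :=
| NF1 c : G c -> NF G [:: c]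
| NF2 c o e rest : G c -> G o -> o <> [::] -> NF G (e :: rest) ->
    (rest <> [::] -> e <> [::]) -> NF G [:: c, o, e & rest].

Lemma red4 d (p1 X1 p2 X2 : word d) : red (p1 ++ red X1 ++ p2 ++ red X2) = red (p1 ++ X1 ++ p2 ++ X2).
Proof. by rewrite red_mid !catA red_catr. Qed.

Lemma red5 d (p1 X1 p2 X2 X3 : word d) :
  red (p1 ++ red X1 ++ p2 ++ red X2 ++ red X3) = red (p1 ++ X1 ++ p2 ++ X2 ++ X3).
Proof.
rewrite red_mid !catA red_catr -(catA _ (red X2)) red_mid; by rewrite -!catA.
Qed.

Lemma base_eq d (a b c o e : word d) :
  red (winv a ++ (a ++ b ++ c) ++ o ++ winv (a ++ b ++ c) ++ e) =
  red (b ++ (c ++ o ++ winv c) ++ winv b ++ (winv a ++ e)).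
Proof. by rewrite !winv_cat -!catA red_cancel_pre. Qed.

Lemma step_eq d (a b c o e Z : word d) :
  red (winv a ++ (a ++ b ++ c) ++ o ++ winv (a ++ b ++ c) ++ e ++ Z) =
  red (b ++ (c ++ o ++ winv c) ++ winv b ++ (winv a ++ e ++ a) ++ (winv a ++ Z)).
Proof.
rewrite !winv_cat -!catA red_cancel_pre.
do 7 apply: red_congr; by rewrite red_cancel_pre'.
Qed.

Lemma jn_catr d (u v w : word d) : v <> [::] -> jn u (v ++ w) = jn u v.
Proof. by move=> H; apply: jn_r; rewrite ohead_cat. Qed.

Lemma Str d (G : wset d) (a b c : word d) :
  (forall w, G w -> reduced w) ->
  reduced b -> b <> [::] ->
  (forall w, G w -> w <> [::] -> let z := red (winv a ++ w ++ a) in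
       [/\ z <> [::], jn (winv b) z & jn z b]) ->
  (forall w, G w -> jn (winv b) (red (winv a ++ w))) ->
  (forall w, G w -> w <> [::] -> let z := red (c ++ w ++ winv c) in
       [/\ z <> [::], jn b z & jn z (winv b)]) ->
  forall i c0 o rest, NF G [:: c0, o & rest] -> size rest = (2 * i).+1 ->
  let V := red (winv a ++ (a ++ b ++ c) ++ o ++ winv (a ++ b ++ c) ++ ev (a ++ b ++ c) rest) in
  [/\ ohead V = ohead b, 2 * i.+1 * size b <= size V &
      sumn (map size (o :: rest)) + 2 * i.+1 * size b <=
      size V + 2 * i.+1 * size c + (2 * i).+1 * size a].
Proof.
move=> Gr Hb Hb0 HA HA2 HC.
have Hwb : winv b <> [::] by move=> /(congr1 size); rewrite size_winv => /size0nil.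
elim=> [|i IH] c0 o rest HNF Hsz.
- inversion HNF as [|c1 o1 e rest1 Hc0 Ho Ho0 HNF' He Ec]; subst; clear HNF.
  case: rest1 Hsz HNF' He => [|? ?] //= _ HNF' He.
  have Ge : G e by inversion HNF'.
  set w1 := red (c ++ o ++ winv c); set w2 := red (winv a ++ e).
  have [w10 j1 j2] := HC o Ho Ho0.
  have Hred : reduced (b ++ w1 ++ winv b ++ w2).
    rewrite reduced_cat Hb (jn_catr _ _ w10) j1 reduced_cat reduced_red (jn_catr _ _ Hwb) j2.
    by rewrite reduced_cat reduced_winv // reduced_red HA2.
  have EV : red (winv a ++ (a ++ b ++ c) ++ o ++ winv (a ++ b ++ c) ++ e) = b ++ w1 ++ winv b ++ w2.
    by rewrite base_eq -(red_reduced Hred) red4.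
  rewrite EV; split; first by rewrite ohead_cat.
    rewrite !size_cat size_winv; lia.
  have s1 := size_red3 c (winv c) (Gr _ Ho).
  have s2 := size_red_catl (winv a) e; rewrite (red_reduced (Gr _ Ge)) in s2.
  move: s1 s2; rewrite -/w1 -/w2 !size_winv => s1 s2.
  rewrite /= !size_cat size_winv; lia.
- inversion HNF as [|c1 o1 e rest1 Hc0 Ho Ho0 HNF' He Ec]; subst; clear HNF.
  case: rest1 Hsz HNF' He => [|o' rest3] //= Hsz HNF' He.
  have He0 : e <> [::] by apply: He.
  have Ge : G e by inversion HNF'.
  have [Hv0 Hv1 Hv2] := IH e o' rest3 HNF' (ltac:(lia)).
  move: Hv0 Hv1 Hv2.
  set V' := red (winv a ++ _ ++ o' ++ _ ++ _) => Hv0 Hv1 Hv2.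
  set w1 := red (c ++ o ++ winv c); set w2 := red (winv a ++ e ++ a).
  have [w10 j1 j2] := HC o Ho Ho0.
  have [w20 j3 j4] := HA e Ge He0.
  have Hred : reduced (b ++ w1 ++ winv b ++ w2 ++ V').
    rewrite reduced_cat Hb (jn_catr _ _ w10) j1 reduced_cat reduced_red (jn_catr _ _ Hwb) j2.
    rewrite reduced_cat reduced_winv // (jn_catr _ _ w20) j3.
    by rewrite reduced_cat !reduced_red (jn_r _ Hv0) j4.
  have EV : red (winv a ++ (a ++ b ++ c) ++ o ++ winv (a ++ b ++ c) ++
            (e ++ (a ++ b ++ c) ++ o' ++ winv (a ++ b ++ c) ++ ev (a ++ b ++ c) rest3))
          = b ++ w1 ++ winv b ++ w2 ++ V'.
    by rewrite step_eq -(red_reduced Hred) red5.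
  rewrite EV; split; first by rewrite ohead_cat.
    rewrite !size_cat size_winv; lia.
  have s1 := size_red3 c (winv c) (Gr _ Ho).
  have s2 := size_red3 (winv a) a (Gr _ Ge).
  move: s1 s2; rewrite -/w1 -/w2 !size_winv => s1 s2.
  move: Hv2; rewrite /= !size_cat size_winv; lia.
Qed.

Definition evt d (g : word d) (rest : seq (word d)) :=
  match rest with [::] => [::] | o :: r => g ++ o ++ winv g ++ ev g r end.

Lemma ev_cons d (g : word d) c rest : ev g (c :: rest) = c ++ evt g rest.
Proof. by case: rest => //=; rewrite cats0. Qed.

Lemma NF_head d (G : wset d) c c' rest : NF G (c :: rest) -> G c' -> NF G (c' :: rest).
Proof.
move=> H Hc'; inversion H; subst; first exact: NF1.
exact: NF2.
Qed.

Lemma NF_hd d (G : wset d) c rest : NF G (c :: rest) -> G c.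
Proof. by move=> H; inversion H. Qed.

Lemma NF_nil d (G : wset d) : ~ NF G [::].
Proof. by move=> H; inversion H. Qed.

Lemma NF_exists d (S : seq (word d)) g h :
  let G := gen_list S in join2 G (conjset g G) h -> exists l, NF G l /\ h = red (ev g l).
Proof.
move=> G [L [HL ->]]; elim: L HL => [|s L IH] HL.
  by exists [:: [::]]; split; [apply: NF1; apply: gen_nil | by []].
have [l [Hl E]] : exists l, NF G l /\ red (flatten L) = red (ev g l).
  by apply: IH => s0 Hs0; apply: HL; rewrite inE Hs0 orbT.
rewrite /= -red_catr E red_catr.
have Hs : G s \/ exists t, G t /\ s = red (g ++ t ++ winv g).
  have := HL s (mem_head _ _); rewrite /conjset /wmul.
  case=> [[H|[t [Ht ->]]] | [H|[t [Ht Et]]]].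
  - by left.
  - by right; exists t; rewrite red_catl -catA.
  - by left; rewrite -(winvK s); apply: gen_inv.
  - right; exists (winv t); split; first exact: gen_inv.
    rewrite -(winvK s) Et red_catl -red_winv !winv_cat winvK. by [].
case: Hs => [Gs | [t [Gt ->]]].
  case: l Hl E => [|c rest] Hl E; first by case: (NF_nil Hl).
  exists (red (s ++ c) :: rest); split; first by apply: NF_head (Hl) _; apply: gen_mul => //; apply: NF_hd Hl.
  by rewrite !ev_cons catA red_catl.
rewrite red_catl -!catA.
case: (eqVneq t [::]) => [->|Ht0].
  by exists l; split => //; rewrite /= red_cancel_pre'.
case: l Hl E => [|c rest] Hl E; first by case: (NF_nil Hl).
case: (boolP ((c == [::]) && (rest != [::]))) => [/andP[/eqP Ec Hr] | Hcr].
- subst c; case: rest Hr Hl E => [|o rest'] // _ Hl E.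
  inversion Hl as [|c1 o1 e rest'' Hc0 Ho Ho0 HNF' He Ec]; subst; clear Hl.
  have -> : red (g ++ t ++ winv g ++ ev g [:: [::], o, e & rest''])
          = red (g ++ red (t ++ o) ++ winv g ++ ev g (e :: rest'')).
    rewrite red_mid /= (catA g t) red_cancelw' -!catA //.
  case: (eqVneq (red (t ++ o)) [::]) => [-> | Ho'].
    by exists (e :: rest''); split => //=; rewrite red_cancel_pre'.
  exists [:: [::], red (t ++ o), e & rest'']; split => //.
  apply: NF2; [exact: gen_nil | exact: gen_mul | exact/eqP | exact: HNF' | exact: He].
- exists [:: [::], t, c & rest]; split => //.
  apply: NF2; [exact: gen_nil | exact: Gt | exact/eqP | exact: Hl |].
  move=> Hr Hc; move: Hcr; rewrite Hc eqxx /=; case: rest Hr {Hl E} => //.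
Qed.

Lemma olast_none d (w : word d) : olast w = None -> w = [::].
Proof. by rewrite /olast; case E: (rev w) => [|z t] // _; rewrite -(revK w) E. Qed.

Lemma ohead_none d (w : word d) : ohead w = None -> w = [::].
Proof. by case: w. Qed.

Lemma jn_some_l d (u v : word d) p : olast u = Some p -> jn u v = (ohead v != Some (linv p)).
Proof. by rewrite /jn => ->; case: (ohead v) => // q; rewrite inj_eq //; move=> ? ? [->]. Qed.

Lemma jn_some_r d (u v : word d) q : ohead v = Some q -> jn u v = (olast u != Some (linv q)).
Proof.
rewrite /jn => ->; case: (olast u) => // p.
apply/idP/idP; apply: contra => /eqP.
- by case=> ->; rewrite linvK.
- by move=> ->; rewrite linvK.
Qed.

Lemma conj_nonempty d (u w : word d) : reduced w -> w <> [::] -> red (winv u ++ w ++ u) <> [::].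
Proof.
move=> Hw Hw0 E; apply: Hw0.
have := congr1 (fun z => red (u ++ z ++ winv u)) E; rewrite /= red_mid -!catA red_cancel_pre'.
by rewrite red_inv_r -(cats0 (winv u)) red_cancelw cats0 red_reduced.
Qed.

Lemma conj_winv d (u w : word d) : winv (red (winv u ++ w ++ u)) = red (winv u ++ winv w ++ u).
Proof. by rewrite -red_winv !winv_cat winvK catA. Qed.

Lemma olast_via d (w : word d) : olast w = omap (@linv d) (ohead (winv w)).
Proof. by rewrite -olast_winv winvK. Qed.

Lemma NF_odd d (G : wset d) l : NF G l -> odd (size l).
Proof. by elim=> //= c o e rest _ _ _ _ IH _; rewrite negbK. Qed.

Lemma decomp d (S : seq (word d)) (g : word d) (k1 k2 : nat) h :
  let Gamma := gen_list S in
  let k := size g in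
  reduced g -> k1 <= k -> in_core Gamma (take k1 g) ->
  (forall i, i <= k -> in_core Gamma (take i g) -> i <= k1) ->
  k2 <= k -> in_core Gamma (take k2 (winv g)) ->
  (forall i, i <= k -> in_core Gamma (take i (winv g)) -> i <= k2) ->
  k1 + k2 < k ->
  join2 Gamma (conjset g Gamma) h ->
  exists i l, [/\ NF Gamma l, size l = (2 * i).+1, h = red (ev g l),
     2 * i * (k - k1 - k2) <= size h &
     sumn (map size l) + 2 * i * (k - k1 - k2) <= size h + 2 * i * (k1 + k2)].
Proof.
move=> G k Hg Hk1 Hc1 Hm1 Hk2 Hc2 Hm2 Hadm Hh.
have [l [Hl Eh]] := NF_exists Hh.
have Gr : forall w, G w -> reduced w by move=> w; apply: gen_reduced.
have [a [b [c [Eg Ea Ewc [sa sb sc]]]]] : exists a b c, [/\ g = a ++ b ++ c, take k1 g = a,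
     take k2 (winv g) = winv c & [/\ size a = k1, size b = k - k1 - k2 & size c = k2]].
  exists (take k1 g), (drop k1 (take (k - k2) g)), (drop (k - k2) g).
  have E1 : take (k - k2) g = take k1 g ++ drop k1 (take (k - k2) g).
    by rewrite -{1}(cat_take_drop k1 (take (k - k2) g)) take_takel //; lia.
  split => //.
  - by rewrite catA -E1 cat_take_drop.
  - by rewrite /winv take_rev size_map map_drop.
  - rewrite size_takel ?size_drop ?size_takel //; try lia; split => //; lia.
have Hb0 : b <> [::] by move=> Eb; move: sb; rewrite Eb /=; lia.
case Ebx: b Hb0 => [|x b'] // _.
case Ey: (olast b) => [y|]; last by move: Ey => /olast_none; rewrite Ebx.
have Hr := Hg; rewrite Eg !reduced_cat in Hr.
move: Hr => /and3P [Ha /and3P [Hb Hc Hjbc] Hjab].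
have Hjax : jn a [:: x] by rewrite -(jn_r a (v := b ++ c)) // ohead_cat Ebx.
have Hrw := reduced_winv Hg; rewrite Eg !winv_cat -catA !reduced_cat in Hrw.
move: Hrw => /and3P [Hc' /and3P [Hb' Ha' Hjba'] Hjcb'].
have ohwb : ohead (winv b) = Some (linv y) by rewrite ohead_winv Ey.
have Hjcy : jn (winv c) [:: linv y] by rewrite -(jn_r _ (v := winv b ++ winv a)) // ohead_cat ?ohwb //;
  move=> /(congr1 size); rewrite size_winv Ebx.
have ext1 : core_edge G a x -> False.
  move=> Hce; have : in_core G (take k1.+1 g).
    apply: (in_core_ext (x0 := x)); first exact: leq_ltn_trans (leq_addr k2 k1) Hadm.
      exact: Hc1.
    by rewrite Ea Eg nth_cat sa ltnn subnn Ebx.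
  move/(Hm1 k1.+1) => H; have : k1.+1 <= k1 by apply: H; exact: leq_ltn_trans (leq_addr k2 k1) Hadm.
  by rewrite ltnn.
have ext2 : core_edge G (winv c) (linv y) -> False.
  move=> Hce; have : in_core G (take k2.+1 (winv g)).
    apply: (in_core_ext (x0 := x)); first by rewrite size_winv; exact: leq_ltn_trans (leq_addl k1 k2) Hadm.
      exact: Hc2.
    rewrite Ewc Eg !winv_cat -catA nth_cat size_winv sc ltnn subnn.
    by case: (winv b) ohwb => //= z t [->].
  move/(Hm2 k2.+1) => H; have : k2.+1 <= k2 by apply: H; exact: leq_ltn_trans (leq_addl k1 k2) Hadm.
  by rewrite ltnn.
have Na : forall w, G w -> ohead (red (winv a ++ w ++ a)) != Some x.
  by move=> w Hw; apply/negP => /eqP E; apply: ext1; apply: K1 E.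
have Na2 : forall w, G w -> ohead (red (winv a ++ w)) != Some x.
  by move=> w Hw; apply/negP => /eqP E; apply: ext1; apply: K2 E.
have Nc : forall w, G w -> ohead (red (c ++ w ++ winv c)) != Some (linv y).
  move=> w Hw; apply/negP => /eqP E; apply: ext2; apply: K1 Hw _ _ _ => //.
  by rewrite winvK.
have olb : olast (winv b) = Some (linv x) by rewrite olast_winv Ebx.
have ohb : ohead b = Some x by rewrite Ebx.
have HA : forall w, G w -> w <> [::] -> let z := red (winv a ++ w ++ a) in
       [/\ z <> [::], jn (winv b) z & jn z b].
  move=> w Hw Hw0 z; split; first exact: conj_nonempty (Gr _ Hw) Hw0.
    by rewrite (jn_some_l _ olb) linvK Na.
  rewrite (jn_some_r _ ohb) olast_via /z conj_winv.
  have := Na _ (gen_inv Hw); case: (ohead _) => [q|] //=; apply: contra => /eqP E; apply/eqP.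
  by congr Some; apply: linv_inj; exact: (congr1 (odflt (linv x)) E).
have HA2 : forall w, G w -> jn (winv b) (red (winv a ++ w)).
  by move=> w Hw; rewrite (jn_some_l _ olb) linvK Na2.
have HC : forall w, G w -> w <> [::] -> let z := red (c ++ w ++ winv c) in
       [/\ z <> [::], jn b z & jn z (winv b)].
  move=> w Hw Hw0 z; split.
  - by rewrite /z -{1}(winvK c); apply: conj_nonempty (Gr _ Hw) Hw0.
  - by rewrite (jn_some_l _ Ey) Nc.
  - rewrite (jn_some_r _ ohwb) olast_via /z -{1}(winvK c) conj_winv winvK linvK.
    have := Nc _ (gen_inv Hw); case: (ohead _) => [q|] //=; apply: contra => /eqP E; apply/eqP.
    by congr Some; apply: linv_inj; rewrite linvK; exact: (congr1 (odflt y) E).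
case: l Hl Eh => [|c0 [|o rest]] Hl Eh; first by case: (NF_nil Hl).
  exists 0, [:: c0]; rewrite !muln0 !mul0n.
  have Hc0 : reduced c0 by apply: Gr; apply: NF_hd Hl.
  have Eh' : h = c0 by rewrite Eh /= red_reduced.
  by split => //; rewrite Eh' /= !addn0.
have Hodd := NF_odd Hl; rewrite /= negbK in Hodd.
set i := (size rest)./2.
have Hsz : size rest = (2 * i).+1.
  by rewrite -{1}(odd_double_half (size rest)) Hodd -muln2 mulnC add1n.
have Gc0 : G c0 by apply: NF_hd Hl.
have Hbne : b <> [::] by rewrite Ebx.
have [Hv0 Hv1 Hv2] := Str Gr Hb Hbne HA HA2 HC Hl Hsz.
move: Hv0 Hv1 Hv2; rewrite -Eg.
set V := red (winv a ++ g ++ o ++ winv g ++ ev g rest) => Hv0 Hv1 Hv2.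
have Ew0 : jn (red (c0 ++ a)) b.
  rewrite (jn_some_r _ ohb) olast_via -red_winv winv_cat.
  have := Na2 _ (gen_inv Gc0); case: (ohead _) => [q|] //=; apply: contra => /eqP E; apply/eqP.
  by congr Some; apply: linv_inj; exact: (congr1 (odflt (linv x)) E).
have EH : h = red (c0 ++ a) ++ V.
  have Hred : reduced (red (c0 ++ a) ++ V) by rewrite reduced_cat !reduced_red (jn_r _ Hv0) Ew0.
  rewrite -(red_reduced Hred) red_cat2 Eh.
  have -> : ev g [:: c0, o & rest] = c0 ++ g ++ o ++ winv g ++ ev g rest by [].
  by rewrite -catA red_cancelw.
have s0 := size_red_catr c0 a; rewrite (red_reduced (Gr _ Gc0)) in s0.
have Esum : sumn (map size [:: c0, o & rest]) = size c0 + sumn (map size (o :: rest)) by [].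
exists i.+1, [:: c0, o & rest]; split => //.
- by rewrite /= Hsz; clear; lia.
- rewrite EH size_cat; move: Hv1; rewrite sb.
  move: (size (red (c0 ++ a))) (size V) => n3 n4 Hv1; clear -Hv1; lia.
- rewrite Esum EH size_cat.
  move: Hv2 s0; rewrite sa sb sc.
  move: (size c0) (sumn _) (size (red (c0 ++ a))) (size V) => n1 n2 n3 n4.
  move=> Hv2 s0; clear -Hv2 s0; lia.
Qed.

Definition allw d (n : nat) : seq (word d) :=
  flatten [seq [seq val t | t <- index_enum (m.-tuple (letter d))] | m <- iota 0 n.+1].
Arguments allw {d} n.

Lemma count_sum_nat (T : Type) (P : pred T) (s : seq T) : count P s = \sum_(x <- s) P x.
Proof. by elim: s => [|x s IH]; rewrite ?big_nil ?big_cons //= IH. Qed.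

Lemma sumn_map_iota (f : nat -> nat) n : sumn (map f (iota 0 n)) = \sum_(m < n) f m.
Proof. by rewrite sumnE big_map -(big_mkord xpredT) /index_iota subn0. Qed.

Lemma cnt_count d (H : wset d) R : cnt H R = count (fun w => asbool (H w)) (allw R).
Proof.
rewrite /allw count_flatten -map_comp sumn_map_iota /cnt.
apply: eq_bigr => m _ /=; rewrite count_map count_sum_nat; by [].
Qed.

Lemma mem_allw d n (w : word d) : (w \in allw n) = (size w <= n).
Proof.
apply/idP/idP.
- case/flatten_mapP => m; rewrite mem_iota add0n => Hm /mapP [t _ ->].
  by rewrite size_tuple.
- move=> Hw; apply/flatten_mapP; exists (size w); first by rewrite mem_iota.
  by apply/mapP; exists (in_tuple w) => //; exact: mem_index_enum.
Qed.

Lemma uniq_block d m : uniq [seq val t | t <- index_enum (m.-tuple (letter d))].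
Proof. rewrite map_inj_uniq ?index_enum_uniq //; exact: val_inj. Qed.

Lemma uniq_allw d n : uniq (@allw d n).
Proof.
elim: n => [|n IH]; first by rewrite /allw /= cats0 uniq_block.
have -> : @allw d n.+1 = allw n ++ [seq val t | t <- index_enum (n.+1.-tuple (letter d))].
  by rewrite /allw -(addn1 n.+1) iotaD map_cat flatten_cat /= cats0.
rewrite cat_uniq IH uniq_block andbT /=.
apply/hasPn => w /mapP [t _ ->]; rewrite mem_allw size_tuple; lia.
Qed.

Fixpoint plist d (G : wset d) (ns : seq nat) : seq (seq (word d)) :=
  match ns with
  | [::] => [:: [::]]
  | n :: ns' => [seq w :: l | w <- [seq w <- allw n | asbool (G w)], l <- plist G ns']
  end.

Lemma size_plist d (G : wset d) ns : size (plist G ns) = \prod_(n <- ns) cnt G n.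
Proof.
elim: ns => [|n ns IH]; first by rewrite big_nil.
by rewrite /= size_allpairs IH big_cons size_filter cnt_count.
Qed.

Lemma mem_plist d (G : wset d) ns l :
  all2 (fun w n => asbool (G w) && (size w <= n)) l ns -> l \in plist G ns.
Proof.
elim: ns l => [|n ns IH] [|w l] //= /andP [/andP [Gw Hw] Hl].
apply: (allpairs_f (fun w l => w :: l)); last exact: IH.
by rewrite mem_filter Gw mem_allw.
Qed.

Lemma all2_nth (S T : Type) (r : S -> T -> bool) x0 y0 (s : seq S) (t : seq T) :
  size s = size t -> (forall i, i < size s -> r (nth x0 s i) (nth y0 t i)) -> all2 r s t.
Proof.
elim: s t => [|x s IH] [|y t] //= [Hsz] H.
rewrite (H 0) //=; apply: IH => // i Hi; exact: (H i.+1).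
Qed.

Lemma count_cover (T : eqType) (A : finType) (s : seq T) (P : pred T) (Q : pred A)
    (R : A -> pred T) :
  (forall w, w \in s -> P w -> exists2 a, Q a & R a w) ->
  count P s <= \sum_(a | Q a) count (R a) s.
Proof.
move=> H; rewrite count_sum_nat.
rewrite [X in _ <= X](eq_bigr (fun a => \sum_(x <- s) R a x)); last by move=> a _; rewrite count_sum_nat.
rewrite (exchange_big_dep xpredT) //=.
rewrite big_seq_cond [X in _ <= X]big_seq_cond.
apply: leq_sum => w /andP [Hw _].
case: (boolP (P w)) => Pw //.
have [a Qa Ra] := H w Hw Pw.
by rewrite (bigD1 a) ?Qa //= Ra.
Qed.

Lemma count_mem_le (T : eqType) (s t : seq T) : uniq s -> count (mem t) s <= size t.
Proof.
move=> Hs; rewrite -size_filter; apply: uniq_leq_size; first exact: filter_uniq.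
by move=> w; rewrite mem_filter => /andP [].
Qed.

Lemma NF_all d (G : wset d) l : NF G l -> forall x, x \in l -> G x.
Proof.
elim=> [c Gc | c o e rest Gc Go _ _ IH _] x; first by rewrite inE => /eqP ->.
rewrite !inE => /orP [/eqP -> // | /orP [/eqP -> // | Hx]]; apply: IH; by rewrite inE.
Qed.

Lemma nth_le_sumn (l : seq nat) j : nth 0 l j <= sumn l.
Proof. elim: l j => [|x l IH] [|j] //=; [exact: leq_addr | exact: leq_trans (IH j) (leq_addl _ _)]. Qed.

Lemma sum_nth_size d (l : seq (word d)) :
  \sum_(j < size l) size (nth [::] l j) = sumn (map size l).
Proof. by rewrite sumnE big_map (big_nth [::]) big_mkord. Qed.

Lemma sum_if0 n e : \sum_(j < n.+1) (if j == 0 :> nat then e else 0) = e.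
Proof. by rewrite big_ord_recl /= big1 ?addn0. Qed.

Unset Implicit Arguments.

Theorem lemma2p10 (d : nat) (S : seq (word d)) (g : word d) (k1 k2 : nat) :
  let Gamma := gen_list S in
  let k := size g in
  reduced g ->
  k1 <= k -> in_core Gamma (take k1 g) ->
  (forall i, i <= k -> in_core Gamma (take i g) -> i <= k1) ->
  k2 <= k -> in_core Gamma (take k2 (winv g)) ->
  (forall i, i <= k -> in_core Gamma (take i (winv g)) -> i <= k2) ->
  k1 + k2 < k ->
  let J := k - k1 - k2 in
  let Gamma' := join2 Gamma (conjset g Gamma) in
  forall R : nat,
    cnt Gamma' R <=
    \sum_(i < (R %/ (2 * J)).+1)
      let T := R + 2 * i * k - 4 * i * J in
      \sum_(a : {ffun 'I_(2 * i).+1 -> 'I_T.+1} | \sum_(j < (2 * i).+1) (a j : nat) == T)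
        \prod_(j < (2 * i).+1) cnt Gamma (a j).
Proof.
move=> Gamma k Hg Hk1 Hc1 Hm1 Hk2 Hc2 Hm2 Hadm J Gamma' R.
set N := (R %/ (2 * J)).+1.
pose T (i : nat) := R + 2 * i * k - 4 * i * J.
pose F (i : 'I_N) (a : {ffun 'I_(2 * i).+1 -> 'I_(T i).+1}) :=
  [seq red (ev g l) | l <- plist Gamma [seq nat_of_ord (a j) | j <- enum 'I_(2 * i).+1]].
pose Ri (i : 'I_N) := fun w => asbool (exists a : {ffun 'I_(2 * i).+1 -> 'I_(T i).+1},
   (\sum_(j < (2 * i).+1) (a j : nat) == T i) /\ w \in F i a).
rewrite cnt_count.
apply: leq_trans (count_cover (Q := xpredT) (R := Ri) _) _.
  move=> w Hw /asboolP HG'.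
  have Hsw : size w <= R by rewrite -mem_allw.
  have [i [l [Hl Hsz Ew Hb1 Hb2]]] := decomp Hg Hk1 Hc1 Hm1 Hk2 Hc2 Hm2 Hadm HG'.
  have Ek : k = J + k1 + k2 by rewrite /J; move: Hadm; rewrite -/k; clear; lia.
  move: Hb1 Hb2; rewrite -/k -/J => Hb1 Hb2.
  have HJ : 0 < J by rewrite /J; move: Hadm; rewrite -/k; clear; lia.
  have HiN : i < N.
    rewrite /N ltnS leq_divRL ?muln_gt0 //.
    move: Hb1 Hsw; move: (size w) => n; clear; lia.
  exists (Ordinal HiN) => //.
  apply/asboolP.
  set Sm := sumn (map size l).
  have HS : Sm <= T i.
    rewrite /T Ek; move: Hb2 Hsw Hb1; rewrite -/Sm; move: (size w) Sm => n m.
    clear; nia.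
  pose v (j : nat) := size (nth [::] l j) + (if j == 0 then T i - Sm else 0).
  have Hv : forall j, v j < (T i).+1.
    move=> j; rewrite ltnS /v.
    have Hn : size (nth [::] l j) <= Sm.
      case: (ltnP j (size l)) => Hj.
        by rewrite /Sm -(nth_map [::] 0) //; exact: nth_le_sumn.
      by rewrite nth_default.
    case: (j == 0); last by rewrite addn0; exact: leq_trans Hn HS.
    clear v; move: Hn HS; move: (T i) Sm (size (nth [::] l j)) => t m z; clear; lia.
  pose a : {ffun 'I_(2 * i).+1 -> 'I_(T i).+1} := [ffun j : 'I_(2 * i).+1 => Ordinal (Hv j)].
  exists a; split.
  - apply/eqP.
    have E1 : \sum_(j < (2 * i).+1) size (nth [::] l j) = Sm by rewrite -Hsz sum_nth_size.
    rewrite (eq_bigr (fun j : 'I_(2 * i).+1 => v j)); last by move=> j _; rewrite ffunE.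
    by rewrite big_split /= E1 sum_if0 subnKC.
  - rewrite Ew; apply: map_f; apply: mem_plist. apply: (@all2_nth _ _ _ [::] 0).
      by rewrite size_map size_enum_ord Hsz.
    move=> j Hj; apply/andP; split; first by apply/asboolP; apply: (NF_all Hl); exact: mem_nth.
    rewrite (nth_map ord0); last by rewrite size_enum_ord -Hsz.
    rewrite ffunE /= nth_enum_ord -?Hsz //; exact: leq_addr.
apply: leq_sum => i _ /=.
have H1 := (count_cover (A := {ffun 'I_(2 * i).+1 -> 'I_(T i).+1}) (Q := fun a : {ffun 'I_(2 * i).+1 -> 'I_(T i).+1} =>
     \sum_(j < (2 * i).+1) (a j : nat) == T i) (R := fun a w => w \in F i a) (s := allw R) (P := Ri i)).
have H2 := H1 (fun w _ H => match asboolP _ H with | ex_intro a (conj Ha Hw) => ex_intro2 _ _ a Ha Hw end).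
apply: (leq_trans H2).
apply: leq_sum => a _.
apply: leq_trans (count_mem_le (F i a) (@uniq_allw d R)) _.
by rewrite size_map size_plist big_map enumT.
Qed.
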